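(* Let $S\subseteq\mathbb{R}^n\times\mathbb{R}^m$ be convex, let the convex projection (CP) be self-bounded, fix $p\in[1,\infty]$ and $\epsilon>0$. If $\bar S\subseteq S$ is a finite $\epsilon$-solution of (CP) (under the $p$-norm), then $\bar S$ is a finite $(\underline{\kappa}\epsilon)$-solution of (MOCP) (under the $p$-norm), where $\underline{\kappa}=\underline{\kappa}(m,p)=m^{\frac{p-1}{p}}(m+1)^{\frac1p}$ (equal to $m$ for $p=\infty$).
   Context: $\|\cdot\|_p$ is the $p$-norm and $B_\epsilon$ the closed $\epsilon$-ball around $0$ in it. (CP): compute $Y=\{y:\exists x,(x,y)\in S\}$; recession cone $A_\infty=\{y: x+\lambda y\in A\ \forall x\in A,\lambda\ge0\}$. (CP) is self-bounded if $Y\ne\mathbb{R}^m$ and $Y\subseteq\operatorname{conv}\{y^{(1)},\dots,y^{(k)}\}+(\operatorname{cl}Y)_\infty$ for finitely many points $y^{(i)}$ (this includes the bounded case $Y\subseteq B_K$, where $(\operatorname{cl}Y)_\infty=\{0\}$). A nonempty finite $\bar S\subseteq S$ is a finite $\epsilon$-solution of (CP) if $Y\subseteq\operatorname{conv}\operatorname{proj}_y[\bar S]+(\operatorname{cl}Y)_\infty+B_\epsilon$. (MOCP): minimize $P(x,y)=(y,-\mathbf{1}^\top y)$ w.r.t. $\le_{\mathbb{R}^{m+1}_+}$ over $(x,y)\in S$, upper image $\mathcal{P}=\operatorname{cl}(P[S]+\mathbb{R}^{m+1}_+)$; $\mathbb{1}\in\mathbb{R}^{m+1}$ is the all-ones vector.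 For self-bounded (MOCP), a nonempty finite $\bar S\subseteq S$ is a finite $\epsilon$-solution of (MOCP) if $\mathcal{P}\subseteq\operatorname{conv}P[\bar S]+\mathcal{P}_\infty-\epsilon\{\|\mathbb{1}\|_p^{-1}\mathbb{1}\}$. *)

(* Defs.v *)
From HB Require Import structures.
From mathcomp Require Import all_boot all_order all_algebra.
From mathcomp Require Import all_classical all_reals all_analysis.
Set Implicit Arguments. Unset Strict Implicit. Unset Printing Implicit Defensive.
Import Order.TTheory GRing.Theory Num.Theory.
Import numFieldNormedType.Exports.
Local Open Scope classical_set_scope.
Local Open Scope ring_scope.

Section Defs.
Variable R : realType.

Definition pnorm (p : \bar R) (k : nat) (v : 'rV[R]_k) : R :=
  match p with
  | +oo%E => \big[Num.max/0]_(i < k) `|v 0 i|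
  | r%:E => (\sum_(i < k) `|v 0 i| `^ r) `^ r^-1
  | -oo%E => 0
  end.

Definition pball (p : \bar R) (k : nat) (eps : R) : set 'rV[R]_k :=
  [set v | pnorm p v <= eps].

Definition msum (k : nat) (A B : set 'rV[R]_k) : set 'rV[R]_k :=
  [set a + b | a in A & b in B].

Definition conv (k : nat) (A : set 'rV[R]_k) : set 'rV[R]_k :=
  [set y | exists (N : nat) (a : 'I_N -> 'rV[R]_k) (l : 'I_N -> R),
     [/\ forall i, A (a i), forall i, 0 <= l i, \sum_(i < N) l i = 1
       & y = \sum_(i < N) l i *: a i]].

Definition recc (k : nat) (A : set 'rV[R]_k) : set 'rV[R]_k :=
  [set y | forall x, A x -> forall lam : R, 0 <= lam -> A (x + lam *: y)].

Definition convex_pairs (n m : nat) (S : set ('rV[R]_n * 'rV[R]_m)) : Prop :=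
  forall a b, S a -> S b -> forall t : R, 0 <= t <= 1 ->
    S (t *: a.1 + (1 - t) *: b.1, t *: a.2 + (1 - t) *: b.2).

Definition projY (n m : nat) (S : set ('rV[R]_n * 'rV[R]_m)) : set 'rV[R]_m :=
  [set y | exists x, S (x, y)].

Definition CP_self_bounded (n m : nat) (S : set ('rV[R]_n * 'rV[R]_m)) : Prop :=
  projY S <> setT /\
  exists ys : seq 'rV[R]_m,
    projY S `<=` msum (conv [set` ys]) (recc (closure (projY S))).

Definition CP_eps_solution (n m : nat) (p : \bar R) (eps : R)
    (S : set ('rV[R]_n * 'rV[R]_m)) (Sbar : seq ('rV[R]_n * 'rV[R]_m)) : Prop :=
  [/\ Sbar <> [::], (forall z, z \in Sbar -> S z) &
      projY S `<=` msum (msum (conv [set` map snd Sbar]) (recc (closure (projY S))))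
                        (@pball p m eps)].

(* objective of (MOCP): P(x,y) = (y, - 1^T y) in R^(m+1) *)
Definition Pobj (n m : nat) (z : 'rV[R]_n * 'rV[R]_m) : 'rV[R]_(m + 1) :=
  row_mx z.2 (- \sum_(j < m) z.2 0 j)%:M.

Definition orthant (k : nat) : set 'rV[R]_k := [set v | forall i, 0 <= v 0 i].

Definition upper_image (n m : nat) (S : set ('rV[R]_n * 'rV[R]_m)) : set 'rV[R]_(m + 1) :=
  closure (msum (@Pobj n m @` S) (@orthant (m + 1)%N)).

Definition MOCP_eps_solution (n m : nat) (p : \bar R) (eps : R)
    (S : set ('rV[R]_n * 'rV[R]_m)) (Sbar : seq ('rV[R]_n * 'rV[R]_m)) : Prop :=
  [/\ Sbar <> [::], (forall z, z \in Sbar -> S z) &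
      upper_image S `<=`
        msum (msum (conv [set` map (@Pobj n m) Sbar]) (recc (upper_image S)))
             [set - (eps * (pnorm p (const_mx 1 : 'rV[R]_(m + 1)))^-1) *: const_mx 1]].

Definition kappa (m : nat) (p : \bar R) : R :=
  match p with
  | +oo%E => m%:R
  | r%:E => (m%:R `^ ((r - 1) / r)) * ((m + 1)%:R `^ r^-1)
  | -oo%E => 0
  end.

End Defs.

(* Main.v *)
Require Import Defs.
From HB Require Import structures.
From mathcomp Require Import all_boot all_order all_algebra.
From mathcomp Require Import all_classical all_reals all_analysis.
From mathcomp.algebra_tactics Require Import ring lra.
Import Order.TTheory GRing.Theory Num.Theory.
Import numFieldNormedType.Exports.
Local Open Scope classical_set_scope.
Local Open Scope ring_scope.

Section Aux.
Variable R : realType.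


Lemma closure_coordP k (A : set 'rV[R]_k) x :
  closure A x <-> forall e, 0 < e -> exists a, A a /\ forall j, `|x 0 j - a 0 j| < e.
Proof.
rewrite closureEnbhs /= meets_globallyl; split.
- move=> H e e0; have [a [Aa Ba]] := H _ (@nbhsx_ballx R _ x e e0).
  exists a; split => // j; by case: Ba => _ /(_ 0 j).
- move=> H B /nbhs_ballP [e e0 sB]; have [a [Aa Ha]] := H e e0.
  exists a; split => //; apply: sB; split => // i j; rewrite ord1; exact: Ha.
Qed.

Lemma closed_coord k (A : set 'rV[R]_k) (x : 'rV[R]_k) : closed A ->
  (forall e, 0 < e -> exists a, A a /\ forall j, `|x 0 j - a 0 j| < e) -> A x.
Proof. move=> /closure_id cA H; rewrite cA; exact/closure_coordP. Qed.



Definition Phat m (y : 'rV[R]_m) : 'rV[R]_(m + 1) :=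
  row_mx y (- \sum_(j < m) y 0 j)%:M.
Arguments Phat {m}.

Lemma PobjE n m (z : 'rV[R]_n * 'rV[R]_m) : Pobj z = Phat z.2.
Proof. by []. Qed.

Lemma Phat_coord m (y : 'rV[R]_m) k :
  Phat y 0 k = if fintype.split k is inl j then y 0 j else - \sum_(j < m) y 0 j.
Proof.
rewrite /Phat mxE; case: fintype.split => j //=.
by rewrite mxE !ord1 eqxx mulr1n.
Qed.

Lemma PhatD m (a b : 'rV[R]_m) : Phat (a + b) = Phat a + Phat b.
Proof.
apply/rowP => k; rewrite [RHS]mxE !Phat_coord; case: fintype.split => j.
  by rewrite mxE.
by under eq_bigr do rewrite mxE; rewrite big_split opprD.
Qed.

Lemma PhatZ m c (a : 'rV[R]_m) : Phat (c *: a) = c *: Phat a.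
Proof.
apply/rowP => k; rewrite [RHS]mxE !Phat_coord; case: fintype.split => j.
  by rewrite mxE.
by under eq_bigr do rewrite mxE; rewrite -mulr_sumr mulrN.
Qed.

Lemma Phat0 m : Phat (0 : 'rV[R]_m) = 0.
Proof. by rewrite -(scale0r 0) PhatZ scale0r. Qed.

Lemma Phat_sum m N (F : 'I_N -> 'rV[R]_m) :
  Phat (\sum_(i < N) F i) = \sum_(i < N) Phat (F i).
Proof.
exact: (big_morph _ (@PhatD m) (Phat0 m)).
Qed.

Lemma Phat_bound m (w : 'rV[R]_m) k : `|Phat w 0 k| <= \sum_(j < m) `|w 0 j|.
Proof.
rewrite Phat_coord; case: fintype.split => j.
  by rewrite (bigD1 j) //= lerDl sumr_ge0.
by rewrite normrN ler_norm_sum.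
Qed.

Lemma Phat_orth m (b : 'rV[R]_m) (s : R) :
  (forall j, `|b 0 j| <= s) -> \sum_(j < m) `|b 0 j| <= s ->
  orthant (Phat b + s *: const_mx 1).
Proof.
move=> H1 H2 k; rewrite /orthant /= mxE Phat_coord !mxE; case: fintype.split => j.
  by move: (H1 j); rewrite ler_norml mulr1 => /andP[h _]; lra.
have := ler_norm_sum (index_enum 'I_m) (fun j => b 0 j) xpredT.
have := ler_norm (\sum_(j < m) b 0 j); rewrite mulr1; lra.
Qed.



Lemma bern (r a : R) : 1 <= r -> 0 <= a -> 1 + r * (a - 1) <= a `^ r.
Proof.
move=> r1 a0; have [->|rn1] := eqVneq r 1.
  by rewrite powRr1 // mul1r addrC subrK.
have r1' : 1 < r by rewrite lt_neqAle eq_sym rn1.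
have r0 : 0 < r by lra.
pose q := r / (r - 1).
have q0 : 0 < q by rewrite /q divr_gt0 //; lra.
have pq : r^-1 + q^-1 = 1.
  by rewrite /q invf_div; field; rewrite gt_eqF // subr_gt0.
have := conjugate_powR a0 ler01 r0 q0 pq.
rewrite mulr1 powR1 => H.
have E : r * (a `^ r / r + 1 / q) = a `^ r + (r - 1).
  by rewrite /q; field; rewrite !gt_eqF // subr_gt0.
have := ler_wpM2l (ltW r0) H; rewrite E; lra.
Qed.


Lemma sum_single k (f : 'I_k -> R) j : (forall i, 0 <= f i) -> f j <= \sum_(i < k) f i.
Proof. by move=> f0; rewrite (bigD1 j) //= lerDl sumr_ge0. Qed.

Lemma pnorm_bound m (p : \bar R) (eps : R) (b : 'rV[R]_m) :
  (1 <= p)%E -> (0 < m)%N -> pnorm p b <= eps ->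
  let s := kappa m p * eps * (pnorm p (const_mx 1 : 'rV[R]_(m + 1)))^-1 in
  (forall j, `|b 0 j| <= s) /\ \sum_(j < m) `|b 0 j| <= s.
Proof.
case: p => [r| |] //= hp m0 hb; last first.
  have P1 : \big[Num.max/0]_(i < m + 1) `|(const_mx 1 : 'rV[R]_(m + 1)) 0 i| = 1.
    apply/eqP; rewrite eq_le; apply/andP; split.
      by apply/bigmax_leP; split => // i _; rewrite mxE normr1.
    by apply: le_trans (le_bigmax _ _ (@Ordinal (m+1) 0 (ltn_addl _ (ltn0Sn 0)))); rewrite mxE normr1.
  rewrite P1 invr1 mulr1.
  have bj j : `|b 0 j| <= eps by apply: le_trans hb; exact: le_bigmax.
  have e0 : 0 <= eps by apply: le_trans (bj (Ordinal m0)).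
  have M1 : 1 <= m%:R :> R by rewrite ler1n.
  split.
    by move=> j; apply: le_trans (bj j) _; rewrite ler_peMl.
  apply: le_trans (ler_sum _ (fun j _ => bj j)) _.
  by rewrite sumr_const card_ord mulr_natl.
have r1 : 1 <= r by rewrite lee_fin in hp.
have r0 : 0 < r by lra.
have M1 : 1 <= m%:R :> R by rewrite ler1n.
set M := m%:R : R.
have P1 : (\sum_(i < m + 1) `|(const_mx 1 : 'rV[R]_(m + 1)) 0 i| `^ r) = (m + 1)%:R.
  under eq_bigr do rewrite mxE normr1 powR1.
  by rewrite sumr_const card_ord.
rewrite P1.
have Q0 : 0 < (m + 1)%:R `^ r^-1 :> R by rewrite powR_gt0 // ltr0n addn1.
set c := (r - 1) / r.
have -> : M `^ c * (m + 1)%:R `^ r^-1 * eps / (m + 1)%:R `^ r^-1 = M `^ c * eps.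
  by field; rewrite gt_eqF.
set T := \sum_(j < m) `|b 0 j| `^ r.
have T0 : 0 <= T by rewrite sumr_ge0 // => i _; rewrite powR_ge0.
have e0 : 0 <= eps by apply: le_trans hb; rewrite powR_ge0.
have Mc : 1 <= M `^ c.
  rewrite -(powRr0 M); apply: ler_powR => //.
  by rewrite /c divr_ge0 //; lra.
have bj j : `|b 0 j| <= eps.
  apply: le_trans hb.
  have -> : `|b 0 j| = (`|b 0 j| `^ r) `^ r^-1.
    by rewrite -powRrM divff ?gt_eqF // powRr1.
  apply: ge0_ler_powR; rewrite ?nnegrE ?invr_ge0 ?powR_ge0 //; first exact: ltW.
  by apply: sum_single => i; rewrite powR_ge0.
split.
  by move=> j; apply: le_trans (bj j) _; rewrite ler_peMl.
set A := \sum_(j < m) `|b 0 j|.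
have A0 : 0 <= A by rewrite sumr_ge0.
have M0 : 0 < M by lra.
have [->|Anz] := eqVneq A 0.
  by rewrite mulr_ge0 // powR_ge0.
have Ap : 0 < A by rewrite lt_neqAle eq_sym Anz.
pose mu := A / M.
have mu0 : 0 < mu by rewrite divr_gt0.
have Tdec : T = mu `^ r * \sum_(j < m) (`|b 0 j| / mu) `^ r.
  rewrite mulr_sumr; apply: eq_bigr => j _.
  rewrite -powRM; [|exact: ltW|by rewrite divr_ge0 // ltW].
  by congr (_ `^ r); field; rewrite gt_eqF.
have sumB : M <= \sum_(j < m) (`|b 0 j| / mu) `^ r.
  apply: le_trans _ (ler_sum _ (fun j _ => @bern r (`|b 0 j| / mu) r1 (divr_ge0 (normr_ge0 _) (ltW mu0)))).
  rewrite big_split /= sumr_const card_ord -mulr_sumr.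
  rewrite (eq_bigr (fun j => `|b 0 j| / mu - 1)) //.
  rewrite sumrB -mulr_suml sumr_const card_ord -/A /mu.
  have -> : A / (A / M) - 1 *+ m = 0.
    by field; rewrite ?Anz ?gt_eqF.
  rewrite /M; lra.
have key : M * mu `^ r <= T.
  by rewrite Tdec mulrC ler_wpM2l // powR_ge0.
have key2 : M `^ r^-1 * mu <= T `^ r^-1.
  have -> : M `^ r^-1 * mu = (M * mu `^ r) `^ r^-1.
    rewrite powRM; [|exact: ltW|exact: powR_ge0].
    by rewrite -powRrM divff ?gt_eqF // powRr1 // ltW.
  apply: ge0_ler_powR; rewrite ?nnegrE ?invr_ge0 ?mulr_ge0 ?powR_ge0 //; exact: ltW.
have cr : c + r^-1 = 1 by rewrite /c; field; rewrite gt_eqF.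
have MM : M `^ c * M `^ r^-1 = M.
  by rewrite -powRD ?cr ?powRr1 ?ltW // gt_eqF // implybT.
apply: (@le_trans _ _ (M `^ c * (M `^ r^-1 * mu))).
  by rewrite mulrA MM /mu mulrC divfK // gt_eqF.
apply: ler_wpM2l; first by rewrite powR_ge0.
exact: le_trans key2 hb.
Qed.
End Aux.
Arguments Phat {R m}.

Section Main.
Variable R : realType.
Variables (n m : nat) (S : set ('rV[R]_n * 'rV[R]_m)).

Let Am := Defs.msum (@Pobj R n m @` S) (@orthant R (m + 1)).
Let Up := upper_image S.

Lemma recc_add k (A : set 'rV[R]_k) a b : recc A a -> recc A b -> recc A (a + b).
Proof.
move=> Ha Hb x Ax l l0; rewrite scalerDr addrA; apply: Hb => //; exact: Ha.
Qed.

Lemma orth_add k (a b : 'rV[R]_k) : orthant a -> orthant b -> orthant (a + b).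
Proof. by move=> Ha Hb i; rewrite mxE addr_ge0. Qed.

Lemma orth_scale k c (a : 'rV[R]_k) : 0 <= c -> orthant a -> orthant (c *: a).
Proof. by move=> c0 Ha i; rewrite mxE mulr_ge0. Qed.

Lemma Am_orth a o : Am a -> orthant o -> Am (a + o).
Proof.
move=> [x Sx [q1 Hq1 <-]] Ho; exists x => //; exists (q1 + o); first exact: orth_add.
by rewrite addrA.
Qed.

Lemma orth_recc o : orthant o -> recc Up o.
Proof.
move=> Ho x /closure_coordP Hx l l0; apply/closure_coordP => e e0.
have [a [Aa Ha]] := Hx e e0; exists (a + l *: o); split.
  by apply: Am_orth => //; exact: orth_scale.
by move=> j; rewrite !mxE opprD addrACA subrr addr0.
Qed.

Lemma Up_shift u d : Up u -> 0 < d -> Am (u + d *: const_mx 1).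
Proof.
move=> /closure_coordP Hu d0; have [a [Aa Ha]] := Hu d d0.
have -> : u + d *: const_mx 1 = a + (u + d *: const_mx 1 - a) by rewrite addrCA subrr addr0.
apply: Am_orth => // j; rewrite !mxE mulr1.
by move: (Ha j); rewrite ltr_norml => /andP[h _]; lra.
Qed.

Lemma recc_lim (w : 'rV[R]_(m + 1)) : (forall e, 0 < e -> exists w', recc Up w' /\ forall k, `|w 0 k - w' 0 k| < e) ->
  recc Up w.
Proof.
move=> H x Ux l l0; apply: closed_coord; first exact: closed_closure.
move=> e e0; have l1 : 0 < l + 1 by lra.
have [w' [Rw' Hw']] := H (e / (l + 1)) (divr_gt0 e0 l1).
exists (x + l *: w'); split; first exact: Rw'.
move=> k; rewrite !mxE opprD addrACA subrr add0r -mulrBr normrM ger0_norm //.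
have := Hw' k; rewrite ltr_pdivlMr // => h.
have := normr_ge0 (w 0 k - w' 0 k); nra.
Qed.


Lemma PhatB k (a b : 'rV[R]_k) : Phat (a - b) = Phat a - Phat b.
Proof. by rewrite PhatD -scaleN1r PhatZ scaleN1r. Qed.

Lemma sum_lt_bound k (w : 'rV[R]_k) c : (forall j, `|w 0 j| < c) ->
  \sum_(j < k) `|w 0 j| <= k%:R * c.
Proof.
move=> H; apply: le_trans (ler_sum _ (fun j _ => ltW (H j))) _.
by rewrite sumr_const card_ord mulr_natl.
Qed.

Lemma Phat_recc d : recc (closure (projY S)) d -> recc Up (Phat d).
Proof.
move=> Hd x /closure_coordP Hx l l0; apply/closure_coordP => e e0.
have e2 : 0 < e / 2 by rewrite divr_gt0.
have [a [[pz [z Sz <-] [q Hq <-]] Ha]] := Hx _ e2.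
case: z Sz Ha => z1 y Sz Ha.
have Yy : closure (projY S) y by apply: subset_closure; exists z1.
have /closure_coordP Hy := Hd y Yy l l0.
have m1 : 0 < m%:R + 1 :> R by rewrite ltr_pwDr // ler0n.
have c0 : 0 < e / (2 * (m%:R + 1)) by rewrite divr_gt0 // mulr_gt0.
have [y' [[x' Sy'] Hy']] := Hy _ c0.
exists (Pobj (x', y') + q); split.
  by exists (Pobj (x', y')); [exists (x', y') | exists q].
set w := y + l *: d - y'.
have Pw : Phat w = Phat y + l *: Phat d - Phat y' by rewrite /w PhatB PhatD PhatZ.
move=> k.
have E : (x + l *: Phat d) 0 k - (Pobj (x', y') + q) 0 k =
    (x 0 k - (Pobj (z1, y) + q) 0 k) + Phat w 0 k.
  rewrite Pw !PobjE /=.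
  move: (Phat y) (Phat y') (Phat d) => Py Py' Pd.
  rewrite !mxE; ring.
rewrite E; apply: le_lt_trans (ler_normD _ _) _.
have h1 := Ha k.
have h2 : `|Phat w 0 k| <= m%:R * (e / (2 * (m%:R + 1))).
  apply: le_trans (@Phat_bound _ _ w k) _; apply: sum_lt_bound => j.
  by have := Hy' j; rewrite /w !mxE.
have h3 : m%:R * (e / (2 * (m%:R + 1))) <= e / 2.
  rewrite mulrA ler_pdivrMr ?mulr_gt0 //.
  have -> : e / 2 * (2 * (m%:R + 1)) = e * (m%:R + 1) by field.
  have := ltW e0; nra.
lra.
Qed.


Lemma conv_idx k N (g : 'I_N -> 'rV[R]_k) (A : set 'rV[R]_k) c :
  (forall x, A x -> exists j, g j = x) -> Defs.conv A c ->
  exists v : 'rV[R]_N, [/\ (forall j, 0 <= v 0 j), \sum_(j < N) v 0 j = 1 &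
    c = \sum_(j < N) v 0 j *: g j].
Proof.
move=> HA [M [a [l [Ha Hl Hs ->]]]].
have [f Hf] : {f : 'I_M -> 'I_N & forall i, g (f i) = a i}.
  by apply: (@boolp.choice _ _ (fun i j => g j = a i)) => i; exact: HA.
exists (\row_j \sum_(i < M | f i == j) l i); split.
- by move=> j; rewrite mxE sumr_ge0.
- rewrite -Hs [RHS](partition_big f xpredT) //=.
  by apply: eq_bigr => j _; rewrite mxE.
- rewrite (partition_big f xpredT) //=; apply: eq_bigr => j _.
  rewrite mxE scaler_suml; apply: eq_bigr => i /eqP fi.
  by rewrite -fi Hf.
Qed.

Let g0 (Sbar : seq ('rV[R]_n * 'rV[R]_m)) (j : 'I_(size Sbar)) := (nth (0, 0) Sbar j).2.

Lemma decomp (Sbar : seq ('rV[R]_n * 'rV[R]_m)) (p : \bar R) (eps : R) a :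
  (1 <= p)%E -> (0 < m)%N ->
  projY S `<=` Defs.msum (Defs.msum (Defs.conv [set` map snd Sbar])
       (recc (closure (projY S)))) (@pball R p m eps) ->
  Am a ->
  exists v : 'rV[R]_(size Sbar), [/\ (forall j, 0 <= v 0 j), \sum_j v 0 j = 1 &
    recc Up (a - \sum_j v 0 j *: Phat (g0 Sbar j) +
       (kappa m p * eps * (pnorm p (const_mx 1 : 'rV[R]_(m + 1)))^-1) *: const_mx 1)].
Proof.
move=> hp m0 HY [pz [z Sz <-] [q Hq <-]].
case: z Sz => z1 y Sz.
have /HY [cd [c Hc [d Hd <-]] [b Hb <-]] : projY S y by exists z1.
have Hmem : forall x, [set` map snd Sbar] x -> exists j, g0 Sbar j = x.
  move=> x /= /(nthP (0 : 'rV[R]_m)) [i Hi <-].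
  rewrite size_map in Hi; exists (Ordinal Hi); rewrite /g0 /=.
  by rewrite (nth_map (0, 0)).
have [v [v0 v1 vc]] := @conv_idx _ _ _ _ _ Hmem Hc.
  exists v; split => //.
  have [B1 B2] := @pnorm_bound _ _ _ _ _ hp m0 Hb.
  set s := (kappa m p * eps * _^-1) in B1 B2 *.
  have -> : Pobj (z1, c + d + b) + q - \sum_j v 0 j *: Phat (g0 Sbar j) + s *: const_mx 1
      = Phat d + ((Phat b + s *: const_mx 1) + q).
    have -> : \sum_j v 0 j *: Phat (g0 Sbar j) = Phat c.
      by rewrite vc Phat_sum; apply: eq_bigr => j _; rewrite PhatZ.
    rewrite PobjE /= !PhatD.
    move: (Phat c) (Phat d) (Phat b) (s *: const_mx 1) => Pc Pd Pb sv.
    by apply/rowP => k; rewrite !mxE; ring.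
  apply: recc_add; first exact: Phat_recc.
  by apply: orth_recc; apply: orth_add => //; exact: Phat_orth.
Qed.


Lemma lin_close N k (Q : 'I_N -> 'rV[R]_k) (v vs : 'rV[R]_N) e (kk : 'I_k) :
  (forall j, `|vs 0 j - v 0 j| < e) ->
  `|(\sum_j v 0 j *: Q j - \sum_j vs 0 j *: Q j) 0 kk| <= e * \sum_j `|Q j 0 kk|.
Proof.
move=> H; rewrite -sumrB summxE mulr_sumr; apply: le_trans (ler_norm_sum _ _ _) _.
apply: ler_sum => j _; rewrite !mxE -mulrBl normrM distrC.
by rewrite ler_wpM2r // ltW.
Qed.

Lemma small_zero (x : R) (N : nat) : (forall e, 0 < e -> `|x| <= N%:R * e) -> x = 0.
Proof.
move=> H; apply/normr0_eq0/eqP; rewrite eq_le normr_ge0 andbT leNgt; apply/negP => hx.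
have N1 : 0 < N%:R + 1 :> R by rewrite ltr_pwDr // ler0n.
have := H (`|x| / (N%:R + 1)) (divr_gt0 hx N1).
rewrite mulrA ler_pdivlMr // => h.
have : `|x| * (N%:R + 1) - N%:R * `|x| = `|x| by ring.
nra.
Qed.

Lemma compact_step (Sbar : seq ('rV[R]_n * 'rV[R]_m)) (p : \bar R) (eps : R) u :
  (1 <= p)%E -> (0 < m)%N ->
  projY S `<=` Defs.msum (Defs.msum (Defs.conv [set` map snd Sbar])
       (recc (closure (projY S)))) (@pball R p m eps) ->
  Up u ->
  exists v : 'rV[R]_(size Sbar), [/\ (forall j, 0 <= v 0 j), \sum_j v 0 j = 1 &
    recc Up (u - \sum_j v 0 j *: Phat (g0 Sbar j) +
       (kappa m p * eps * (pnorm p (const_mx 1 : 'rV[R]_(m + 1)))^-1) *: const_mx 1)].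
Proof.
move=> hp m0 HY Uu.
set s := kappa m p * eps * _^-1.
set N := size Sbar.
set Q := fun j : 'I_N => Phat (g0 Sbar j).
pose E := fun d : R => [set v : 'rV[R]_N | [/\ (forall j, 0 <= v 0 j), \sum_j v 0 j = 1 &
    recc Up (u + d *: const_mx 1 - \sum_j v 0 j *: Q j + s *: const_mx 1)]].
have orth1 : orthant (const_mx 1 : 'rV[R]_(m + 1)) by move=> i; rewrite mxE.
have Ene d : 0 < d -> E d !=set0.
  move=> d0; have [v Hv] := @decomp Sbar p eps _ hp m0 HY (@Up_shift _ _ Uu d0).
  by exists v.
have Emono d1 d2 : d1 <= d2 -> E d1 `<=` E d2.
  move=> d12 v [v0 v1 vr]; split => //.
  have -> : u + d2 *: const_mx 1 - \sum_j v 0 j *: Q j + s *: const_mx 1 =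
     (u + d1 *: const_mx 1 - \sum_j v 0 j *: Q j + s *: const_mx 1) + (d2 - d1) *: const_mx 1.
    move: (\sum_j v 0 j *: Q j) (const_mx 1 : 'rV[R]_(m + 1)) => Lv c1.
    by apply/rowP => k; rewrite !mxE; ring.
  apply: recc_add => //; apply: orth_recc; apply: orth_scale => //; lra.
pose C := [set v : 'rV[R]_N | forall j, `[0, 1]%classic (v 0 j)].
have Ccomp : compact C.
  by apply: (@rV_compact R N (fun _ => `[0 : R, 1]%classic)) => j; exact: segment_compact.
pose F := filter_from [set d : R | 0 < d] E.
have FF : Filter F.
  apply: filter_from_filter; first by exists 1; rewrite /= ltr01.
  move=> d1 d2 d10 d20; exists (Num.min d1 d2); first by rewrite /= lt_min d10 d20.
  move=> v Ev; split; apply: (Emono _ _ _ v Ev).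
    by rewrite ge_min lexx.
  by rewrite ge_min lexx orbT.
have PF : ProperFilter F by apply: filter_from_proper => d d0; exact: Ene.
have FC : F C.
  exists 1 => //= v [v0 v1 _] j; rewrite /= in_itv /= v0 /= -v1.
  by apply: sum_single.
have [vs [Cvs clv]] := Ccomp F PF FC.
have approx d e : 0 < d -> 0 < e -> exists v, E d v /\ forall j, `|vs 0 j - v 0 j| < e.
  move=> d0 e0; have [v [Ev Bv]] := clv (E d) _ (ex_intro2 _ _ d d0 (@subset_refl _ (E d))) (@nbhsx_ballx R _ vs e e0).
  exists v; split => // j; by case: Bv => _ /(_ 0 j).
exists vs; split.
- by move=> j; have := Cvs j; rewrite /= in_itv /= => /andP[].
- apply/eqP; rewrite -subr_eq0; apply/eqP; apply: (@small_zero _ N) => e e0.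
  have [v [[_ v1 _] Hv]] := approx 1 e ltr01 e0.
  have -> : \sum_j vs 0 j - 1 = \sum_j vs 0 j - \sum_j v 0 j by rewrite v1.
  rewrite -sumrB; apply: le_trans (ler_norm_sum _ _ _) _.
  apply: le_trans (ler_sum _ (fun j _ => ltW (Hv j))) _.
  by rewrite sumr_const card_ord mulr_natl.
set Ctot := \sum_(k < m + 1) \sum_j `|Q j 0 k|.
have C0 : 0 <= Ctot by apply: sumr_ge0 => k _; apply: sumr_ge0.
apply: recc_lim => e e0.
have e2 : 0 < e / 2 by rewrite divr_gt0.
have e'0 : 0 < e / (2 * (Ctot + 1)) by rewrite divr_gt0 // mulr_gt0 //; lra.
have [v [[_ _ vr] Hv]] := approx _ _ e2 e'0.
exists (u + (e / 2) *: const_mx 1 - \sum_j v 0 j *: Q j + s *: const_mx 1); split => // k.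
have -> : (u - \sum_j vs 0 j *: Q j + s *: const_mx 1) 0 k -
   (u + (e / 2) *: const_mx 1 - \sum_j v 0 j *: Q j + s *: const_mx 1) 0 k =
   (\sum_j v 0 j *: Q j - \sum_j vs 0 j *: Q j) 0 k - e / 2.
  move: (\sum_j v 0 j *: Q j) (\sum_j vs 0 j *: Q j) => Lv Lvs.
  rewrite !mxE; ring.
apply: le_lt_trans (ler_normD _ _) _; rewrite normrN [`|e / 2|]gtr0_norm //.
have h1 := @lin_close _ _ Q v vs _ k Hv.
have h2 : \sum_j `|Q j 0 k| <= Ctot.
  by apply: (@sum_single _ _ (fun k0 => \sum_j `|Q j 0 k0|) k) => i; apply: sumr_ge0.
have h3 : e / (2 * (Ctot + 1)) * Ctot < e / 2.
  have -> : e / (2 * (Ctot + 1)) * Ctot = e / 2 * (Ctot / (Ctot + 1)).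
    by field; rewrite gt_eqF //; lra.
  have t1 : Ctot / (Ctot + 1) < 1 by rewrite ltr_pdivrMr ?mul1r; lra.
  nra.
have h4 := ler_wpM2l (ltW e'0) h2.
lra.
Qed.


Lemma main_aux (p : \bar R) (eps : R) (Sbar : seq ('rV[R]_n * 'rV[R]_m)) :
  convex_pairs S -> CP_self_bounded S -> (1 <= p)%E -> 0 < eps ->
  CP_eps_solution p eps S Sbar -> MOCP_eps_solution p (kappa m p * eps) S Sbar.
Proof.
move=> _ [HYT _] hp e0 [Sne SbS HY].
have m0 : (0 < m)%N.
  rewrite lt0n; apply/eqP => m0; apply: HYT.
  have [z Hz] : exists z, z \in Sbar.
    by case: (Sbar) Sne => [//|z s _]; exists z; rewrite inE eqxx.
  apply/seteqP; split => // y _; exists z.1.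
  have -> : y = z.2 by apply/rowP => -[i Hi]; exfalso; move: Hi; rewrite m0.
  by rewrite -surjective_pairing; exact: SbS.
split => //.
move=> u Uu.
have [vs [v0 v1 vr]] := @compact_step Sbar p eps u hp m0 HY Uu.
set s := kappa m p * eps * _^-1 in vr *.
set L := \sum_j vs 0 j *: Phat (g0 Sbar j) in vr *.
exists (L + (u - L + s *: const_mx 1)).
  exists L.
    exists (size Sbar), (fun j => Pobj (nth (0, 0) Sbar j)), (fun j => vs 0 j).
    split => // j; rewrite /= map_f // mem_nth //.
  by exists (u - L + s *: const_mx 1).
exists (- s *: const_mx 1) => //.
rewrite scaleNr; move: (s *: const_mx 1) => sv.
by clear vr; move: L => L0; apply/rowP => k; rewrite !mxE; ring.
Qed.

End Main.

Theorem mainTheorem6 (R : realType) (n m : nat)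
    (S : set ('rV[R]_n * 'rV[R]_m)) (p : \bar R) (eps : R)
    (Sbar : seq ('rV[R]_n * 'rV[R]_m)) :
  convex_pairs S ->
  CP_self_bounded S ->
  (1 <= p)%E ->
  0 < eps ->
  CP_eps_solution p eps S Sbar ->
  MOCP_eps_solution p (kappa m p * eps) S Sbar.
Proof. exact: main_aux. Qed.
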